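(* Let $m=2^l m_1$ with $l\ge0$ and $m_1$ odd (and $m\ge2$). Then $L_m(3)=l$.
   Context: The Ducci function $D:\mathbb{Z}_m^3\to\mathbb{Z}_m^3$ is $D(x_1,x_2,x_3)=(x_1+x_2,\,x_2+x_3,\,x_3+x_1)$, entries mod $m$. For $\mathbf{u}\in\mathbb{Z}_m^3$, $\mathrm{Len}(\mathbf{u})$ is the smallest $j\ge0$ such that $D^{j+k}(\mathbf{u})=D^j(\mathbf{u})$ for some $k\ge1$, and $L_m(3)=\mathrm{Len}(0,0,1)$. *)

(* Defs.v *)
From mathcomp Require Import all_boot all_algebra.
Set Implicit Arguments. Unset Strict Implicit. Unset Printing Implicit Defensive.
Import GRing.Theory.
Local Open Scope ring_scope.

(* Ducci function on Z_m^3 (Z_m = 'Z_m, faithful for 1 < m). *)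
Definition ducci (m : nat) (u : 'Z_m * 'Z_m * 'Z_m) : 'Z_m * 'Z_m * 'Z_m :=
  let: (x1, x2, x3) := u in (x1 + x2, x2 + x3, x3 + x1).

Definition periodic_from (m : nat) (u : 'Z_m * 'Z_m * 'Z_m) (j : nat) : Prop :=
  exists k : nat, (1 <= k)%N /\ iter (j + k) (ducci (m:=m)) u = iter j (ducci (m:=m)) u.

Definition is_Len (m : nat) (u : 'Z_m * 'Z_m * 'Z_m) (j : nat) : Prop :=
  periodic_from u j /\ forall i : nat, (i < j)%N -> ~ periodic_from u i.

Definition L3_is (m : nat) (j : nat) : Prop := is_Len (m:=m) (0, 0, 1) j.

(* Main.v *)
Require Import Defs.
From mathcomp Require Import all_boot all_algebra all_fingroup all_solvable.
From mathcomp Require Import ring zify.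
Import GRing.Theory.

Section Aux.
Variable m : nat.
Local Open Scope ring_scope.

Definition sig3 (u : 'Z_m * 'Z_m * 'Z_m) : 'Z_m := let: (a,b,c) := u in a + b + c.
Definition addc (u : 'Z_m * 'Z_m * 'Z_m) (d : 'Z_m) : 'Z_m * 'Z_m * 'Z_m :=
  let: (a,b,c) := u in (a + d, b + d, c + d).

Lemma sig3_ducci u : sig3 (ducci u) = 2 * sig3 u.
Proof. case: u => [[a b] c] /=; ring. Qed.

Lemma sig3_iter j u : sig3 (iter j (ducci (m:=m)) u) = (2 ^ j)%N%:R * sig3 u.
Proof.
elim: j => [|j IH] /=; first by rewrite mul1r.
rewrite sig3_ducci IH expnS natrM mulrA. by [].
Qed.

Lemma ducci_addc u d : ducci (addc u d) = addc (ducci u) (2 * d).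
Proof. case: u => [[a b] c] /=; congr (_, _, _); ring. Qed.

Lemma iter_addc j u d : iter j (ducci (m:=m)) (addc u d) = addc (iter j (ducci (m:=m)) u) ((2 ^ j)%N%:R * d).
Proof.
elim: j => [|j IH] /=; first by rewrite mul1r.
rewrite IH ducci_addc expnS natrM mulrA. by [].
Qed.

Lemma addc_addc u d e : addc (addc u d) e = addc u (d + e).
Proof. case: u => [[a b] c] /=; congr (_, _, _); ring. Qed.

Lemma sig3_addc u d : sig3 (addc u d) = sig3 u + 3 * d.
Proof. case: u => [[a b] c] /=; ring. Qed.

Lemma iter6 u : iter 6 (ducci (m:=m)) u = addc u (21 * sig3 u).
Proof. case: u => [[a b] c] /=; congr (_, _, _); ring. Qed.

Fixpoint cc (t : nat) : nat := if t is t'.+1 then (64 * cc t' + 21)%N else 0%N.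

Lemma iter6t t u : iter (6 * t) (ducci (m:=m)) u = addc u ((cc t)%:R * sig3 u).
Proof.
elim: t => [|t IH].
  by case: u => [[a b] c] /=; congr (_, _, _); rewrite mul0r addr0.
rewrite mulnS iterD IH iter6 addc_addc sig3_addc /= natrD natrM; congr addc.
rewrite -[cc t]/(cc t)%N; ring.
Qed.

End Aux.

Lemma cc_eq t : (3 * cc t + 1 = 64 ^ t)%N.
Proof. elim: t => [|t IH] //=. rewrite expnS -IH. lia. Qed.

Theorem theorem4p1 (m l m1 : nat) (hm : (2 <= m)%N) (hm1 : odd m1)
  (hdec : m = (2 ^ l * m1)%N) : L3_is m l.
Proof.
split.
- set t := totient (3 * m1).
  have m1pos : (0 < m1)%N by rewrite lt0n; apply/eqP => h0; rewrite h0 in hm1.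
  have tpos : (0 < t)%N by rewrite /t totient_gt0; lia.
  exists (6 * t)%N; split; first lia.
  rewrite iterD iter6t iter_addc.
  have hd : (m %| 2 ^ l * cc t)%N.
    rewrite hdec dvdn_pmul2l ?expn_gt0 //.
    have co : coprime 64 (3 * m1).
      rewrite coprimeMr; apply/andP; split => //.
      rewrite -[64%N]/(2 ^ 6)%N coprimeXl // coprime2n //.
    have := Euler_exp_totient co; rewrite -/t -cc_eq.
    move/eqP; rewrite -[X in _ == X %[mod _]]add0n eqn_modDr.
    move/eqP => h.
    have : (3 * m1 %| 3 * cc t)%N by rewrite /dvdn h mod0n.
    by rewrite dvdn_pmul2l.
  have -> : ((((2 ^ l)%N%:R * ((cc t)%:R * sig3 m (0, 0, 1)))) = 0 :> 'Z_m)%R.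
    rewrite /= !add0r mulr1 -natrM.
    apply: val_inj; rewrite /= val_Zp_nat //.
    by move: hd; rewrite /dvdn => /eqP ->.
  case: (iter _ _ _) => [[a b] c] /=.
  by rewrite !addr0.
- move=> i hil [k [hk heq]].
  have := congr1 (sig3 m) heq; rewrite !sig3_iter /= !add0r !mulr1 => /(congr1 val).
  rewrite /= !val_Zp_nat // => /eqP; rewrite eqn_mod_dvd; last by rewrite leq_exp2l // leq_addr.
  rewrite expnD -{2}[2 ^ i]muln1 -mulnBr.
  have h2 : (2 ^ l %| m)%N by rewrite hdec dvdn_mulr.
  move=> /(dvdn_trans h2).
  rewrite Gauss_dvdl; last first.
    rewrite coprimeXl // coprime2n oddB; last by rewrite expn_gt0.
    by rewrite oddX /=; case: k hk heq.
  by rewrite dvdn_Pexp2l // leqNgt hil.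
Qed.
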